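(* Let $(\Omega(\mathcal A),\wedge,[\cdot,\cdot],\mathbf d)$ be a differential Gerstenhaber superalgebra, and let $(\Omega^1(\mathcal A),\llbracket\cdot,\cdot\rrbracket,\rho)$ be the associated Lie superalgebroid, $\llbracket\alpha,\beta\rrbracket=[\alpha,\beta]$, $\rho(\alpha)=[\alpha,\cdot]|_{\mathcal A}$. Then $\rho$ is skew-supersymmetric, $\llbracket\mathbf d f,\mathbf d g\rrbracket=\mathbf d(\rho(\mathbf d f)(g))$ for all $f,g\in\mathcal A$, and consequently the bracket has the form $$\llbracket\alpha,\beta\rrbracket=\rho(\alpha)\lrcorner\mathbf d\beta-(-1)^{p(\alpha)p(\beta)}\rho(\beta)\lrcorner\mathbf d\alpha+\mathbf d\big(\beta(\rho(\alpha))\big),$$ and the superalgebroid is of Poisson type.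
   Context: $\mathcal A$ is a $\mathbb Z$-graded, associative, graded-commutative unital real algebra, regarded as supercommutative with parity $p$ = degree mod 2. $\operatorname{Der}(\mathcal A)$: graded derivations. $\Omega^1(\mathcal A)=\ker(\mathbf m:\mathcal A\otimes\mathcal A\to\mathcal A)$ with $\mathbf d a=a\otimes1-1\otimes a$, generated over $\mathcal A$ by $\mathbf d\mathcal A$, paired with $\operatorname{Der}(\mathcal A)$ via $\langle D,\mathbf d a\rangle=D(a)$, written $\alpha(D)$; $\Omega(\mathcal A)$ is the algebra of superforms generated over $\mathcal A$ by $\Omega^1(\mathcal A)$, bigraded by form degree $\deg$ and parity $p$, with exterior superderivative $\mathbf d$ ($\mathbf d^2=0$) and interior product $D\lrcorner$. A Gerstenhaber superbracket on $\Omega(\mathcal A)$ satisfies, for bihomogeneous elements, $[\alpha,\beta]=-(-1)^{(\deg\alpha-1)(\deg\beta-1)+p(\alpha)p(\beta)}[\beta,\alpha]$, $[\alpha,[\beta,\gamma]]=[[\alpha,\beta],\gamma]+(-1)^{(\deg\alpha-1)(\deg\beta-1)+p(\alpha)p(\beta)}[\beta,[\alpha,\gamma]]$, $[\alpha,\beta\wedge\gamma]=[\alpha,\beta]\wedge\gamma+(-1)^{(\deg\alpha-1)\deg\beta+p(\alpha)p(\beta)}\beta\wedge[\alpha,\gamma]$, and has form degree $-1$; it is differential if $\mathbf d[\alpha,\beta]=[\mathbf d\alpha,\beta]+(-1)^{\deg\alpha-1}[\alpha,\mathbf d\beta]$. A Lie superalgebroid on $\Omega^1(\mathcal A)$ is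 an even $\mathcal A$-linear anchor $\rho:\Omega^1(\mathcal A)\to\operatorname{Der}(\mathcal A)$ with a bilinear bracket making $\Omega^1(\mathcal A)$ a Lie superalgebra and satisfying $\llbracket\alpha,f\beta\rrbracket=\rho(\alpha)(f)\beta+(-1)^{p(\alpha)p(f)}f\llbracket\alpha,\beta\rrbracket$. The anchor is skew-supersymmetric if $\alpha(\rho(\beta))=-(-1)^{p(\alpha)p(\beta)}\beta(\rho(\alpha))$. A Lie superalgebroid is of Poisson type if its anchor is skew-supersymmetric and $\{f,g\}:=\rho(\mathbf d f)(g)$ satisfies $\{f,\{g,h\}\}=\{\{f,g\},h\}+(-1)^{p(f)p(g)}\{g,\{f,h\}\}$ (equivalently $[\rho(\mathbf d f),\rho(\mathbf d g)]=\rho(\mathbf d\{f,g\})$). *)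

(* Defs.v *)
(* Abstract (axiomatic) model of the differential Gerstenhaber
   superalgebra of superforms Omega(A) over a supercommutative algebra A. *)
From HB Require Import structures.
From mathcomp Require Import all_boot all_order all_algebra.
Set Implicit Arguments. Unset Strict Implicit. Unset Printing Implicit Defensive.
Import Order.TTheory GRing.Theory Num.Theory.
Local Open Scope ring_scope.

Definition sgn {R : pzRingType} (n : nat) : R := (-1) ^+ n.

Definition superder (K : realFieldType) (A : lalgType K)
    (parA : bool -> pred A) (q : bool) (D : A -> A) : Prop :=
  [/\ forall a b, D (a + b) = D a + D b,
      forall (c : K) a, D (c *: a) = c *: D a,
      forall p a, parA p a -> parA (p (+) q) (D a)
    & forall p a b, parA p a -> D (a * b) = D a * b + sgn (q && p) * (a * D b)].

(* The algebra Om of superforms over the superalgebra A, bigraded by form degree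
   (fdeg k) and parity (par p), with wedge product = the ring product of Om,
   A identified with the 0-forms via emb (inverse of0), exterior superderivative
   dd, and interior product ip D for D in Der(A). *)
Record superforms (K : realFieldType) (A Om : lalgType K) := Superforms {
  parA : bool -> pred A;
  fdeg : nat -> pred Om;
  par : bool -> pred Om;
  emb : A -> Om;
  of0 : Om -> A;
  dd : Om -> Om;
  ip : (A -> A) -> Om -> Om;
  parA0 : forall p, parA p 0;
  parAD : forall p a b, parA p a -> parA p b -> parA p (a + b);
  parAZ : forall p (c : K) a, parA p a -> parA p (c *: a);
  parA1 : parA false 1;
  parAM : forall p q a b, parA p a -> parA q b -> parA (p (+) q) (a * b);
  parA_indep : forall a, parA false a -> parA true a -> a = 0;
  parA_decomp : forall a, exists a0 a1, [/\ parA false a0, parA true a1 & a = a0 + a1];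
  parA_comm : forall p q a b, parA p a -> parA q b -> a * b = sgn (p && q) * (b * a);
  fdeg0 : forall k, fdeg k 0;
  fdegD : forall k x y, fdeg k x -> fdeg k y -> fdeg k (x + y);
  fdegZ : forall k (c : K) x, fdeg k x -> fdeg k (c *: x);
  fdeg1 : fdeg 0 1;
  fdegM : forall k l x y, fdeg k x -> fdeg l y -> fdeg (k + l) (x * y);
  fdeg_indep : forall k l x, k <> l -> fdeg k x -> fdeg l x -> x = 0;
  par0 : forall p, par p 0;
  parD : forall p x y, par p x -> par p y -> par p (x + y);
  parZ : forall p (c : K) x, par p x -> par p (c *: x);
  par1 : par false 1;
  parM : forall p q x y, par p x -> par q y -> par (p (+) q) (x * y);
  par_indep : forall x, par false x -> par true x -> x = 0;
  bigraded_decomp : forall x, exists s : seq (nat * bool * Om),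
      (forall t, t \in s -> fdeg t.1.1 t.2 /\ par t.1.2 t.2)
      /\ x = \sum_(t <- s) t.2;
  wedge_comm : forall k l p q x y, fdeg k x -> par p x -> fdeg l y -> par q y ->
      x * y = sgn (k * l + (p && q)) * (y * x);
  embD : forall a b, emb (a + b) = emb a + emb b;
  embZ : forall (c : K) a, emb (c *: a) = c *: emb a;
  embM : forall a b, emb (a * b) = emb a * emb b;
  emb1 : emb 1 = 1;
  emb_fdeg : forall a, fdeg 0 (emb a);
  emb_par : forall p a, parA p a -> par p (emb a);
  embK : forall a, of0 (emb a) = a;
  of0K : forall x, fdeg 0 x -> emb (of0 x) = x;
  omega1_gen : forall p x, fdeg 1 x -> par p x ->
      exists s : seq (A * A),
        (forall t, t \in s -> exists pf pg,
             [/\ parA pf t.1, parA pg t.2 & pf (+) pg = p])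
        /\ x = \sum_(t <- s) emb t.1 * dd (emb t.2);
  omega_gen : forall k x, fdeg k.+1 x ->
      exists s : seq (Om * Om),
        (forall t, t \in s -> fdeg 1 t.1 /\ fdeg k t.2)
        /\ x = \sum_(t <- s) t.1 * t.2;
  ddD : forall x y, dd (x + y) = dd x + dd y;
  ddZ : forall (c : K) x, dd (c *: x) = c *: dd x;
  dd_fdeg : forall k x, fdeg k x -> fdeg k.+1 (dd x);
  dd_par : forall p x, par p x -> par p (dd x);
  ddK : forall x, dd (dd x) = 0;
  ddM : forall k x y, fdeg k x -> dd (x * y) = dd x * y + sgn k * (x * dd y);
  ipD : forall q D x y, superder parA q D -> ip D (x + y) = ip D x + ip D y;
  ipZ : forall q D (c : K) x, superder parA q D -> ip D (c *: x) = c *: ip D x;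
  ip_emb : forall q D a, superder parA q D -> ip D (emb a) = 0;
  ip_d : forall q D a, superder parA q D -> ip D (dd (emb a)) = emb (D a);
  ip_fdeg : forall q D k x, superder parA q D -> fdeg k.+1 x -> fdeg k (ip D x);
  ip_par : forall q D p x, superder parA q D -> par p x -> par (p (+) q) (ip D x);
  ipM : forall q D k p x y, superder parA q D -> fdeg k x -> par p x ->
      ip D (x * y) = ip D x * y + sgn (k + (q && p)) * (x * ip D y)
}.

Section Defs.
Variables (K : realFieldType) (A Om : lalgType K) (S : superforms A Om).

Definition bihom (k : nat) (p : bool) (x : Om) : Prop := fdeg S k x /\ par S p x.

Record diff_gerstenhaber (br : Om -> Om -> Om) : Prop := DiffGerstenhaber {
  brDl : forall x y z, br (x + y) z = br x z + br y z;
  brDr : forall x y z, br x (y + z) = br x y + br x z;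
  brZl : forall (c : K) x y, br (c *: x) y = c *: br x y;
  brZr : forall (c : K) x y, br x (c *: y) = c *: br x y;
  (* form degree -1 (Omega^{-1} = 0) *)
  br_fdeg : forall k l x y, fdeg S k x -> fdeg S l y -> fdeg S (k + l).-1 (br x y);
  br_fdeg0 : forall x y, fdeg S 0 x -> fdeg S 0 y -> br x y = 0;
  br_par : forall p q x y, par S p x -> par S q y -> par S (p (+) q) (br x y);
  (* (-1)^{(k-1)(l-1)} = (-1)^{(k+1)(l+1)} etc. *)
  br_skew : forall k l p q x y, bihom k p x -> bihom l q y ->
      br x y = - (sgn (k.+1 * l.+1 + (p && q)) * br y x);
  br_jacobi : forall k l p q x y z, bihom k p x -> bihom l q y ->
      br x (br y z) = br (br x y) z + sgn (k.+1 * l.+1 + (p && q)) * br y (br x z);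
  br_leibniz : forall k l p q x y z, bihom k p x -> bihom l q y ->
      br x (y * z) = br x y * z + sgn (k.+1 * l + (p && q)) * (y * br x z);
  br_diff : forall k x y, fdeg S k x ->
      dd S (br x y) = br (dd S x) y + sgn k.+1 * br x (dd S y)
}.

Definition anchor (br : Om -> Om -> Om) (alpha : Om) : A -> A :=
  fun f => of0 S (br alpha (emb S f)).

Definition pairing (alpha : Om) (D : A -> A) : A := of0 S (ip S D alpha).

Definition skew_anchor (rho : Om -> A -> A) : Prop :=
  forall pa pb a b, bihom 1 pa a -> bihom 1 pb b ->
    pairing a (rho b) = - (sgn (pa && pb) * pairing b (rho a)).

Definition poisson_type (rho : Om -> A -> A) : Prop :=
  skew_anchor rho /\
  let pb := fun f g => rho (dd S (emb S f)) g in
  forall pf pg ph f g h, parA S pf f -> parA S pg g -> parA S ph h ->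
    pb f (pb g h) = pb (pb f g) h + sgn (pf && pg) * pb g (pb f h).

End Defs.

(* Main.v *)
Require Import Defs.
From HB Require Import structures.
From mathcomp Require Import all_boot all_order all_algebra.
Set Implicit Arguments. Unset Strict Implicit. Unset Printing Implicit Defensive.
Import Order.TTheory GRing.Theory Num.Theory.
Local Open Scope ring_scope.

Lemma sgnE (R : pzRingType) n : sgn n = (if odd n then -1 else 1 : R).
Proof. by rewrite /sgn -signr_odd; case: odd; rewrite ?expr0 ?expr1. Qed.

Ltac sgnsimp := rewrite ?sgnE ?(oddD, oddM, oddb) /=.
Ltac nrm := rewrite ?(mulN1r, mulrN1, mul1r, mulr1, mulrN, mulNr, opprK, mulrA, mul0r, mulr0, addr0, add0r, oppr0).

Lemma fin_rearr (V : zmodType) (T1 L1 L2 X1 X2 Y1 Y2 Z1 Z2 : V) :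
  L1 = Y1 -> - L2 = Z2 -> X1 + X2 = 0 -> Y2 = Z1 ->
  T1 + (L1 - L2) = T1 + X1 + (Y1 - Y2) + (X2 + (Z1 + Z2)).
Proof.
move=> -> <- h ->.
have -> : X2 = - X1 by apply/eqP; rewrite -addr_eq0 addrC h.
rewrite -!addrA; congr (T1 + _).
by rewrite addrCA; congr (Y1 + _); rewrite addrCA addNKr addKr.
Qed.

Section Main.
Variables (K : realFieldType) (A Om : lalgType K) (S : superforms A Om)
  (br : Om -> Om -> Om) (hG : diff_gerstenhaber S br).

Local Notation e := (emb S).
Local Notation d := (dd S).
Local Notation rho := (anchor S br).
Local Notation ip := (ip S).

Lemma emb0 : e 0 = 0.
Proof. have h := embD S 0 0; rewrite addr0 in h; apply: (addrI (e 0)); by rewrite addr0 -h. Qed.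
Lemma embN a : e (-a) = - e a.
Proof. by apply/eqP; rewrite -addr_eq0 -embD addNr emb0. Qed.
Lemma emb_sgn n : e (sgn n) = sgn n.
Proof. by rewrite !sgnE; case: odd; rewrite ?embN emb1. Qed.
Lemma emb_inj : injective e.
Proof. exact: can_inj (embK S). Qed.

Lemma dd0 : d 0 = 0.
Proof. have h := ddD S 0 0; rewrite addr0 in h; apply: (addrI (d 0)); by rewrite addr0 -h. Qed.
Lemma ddN x : d (-x) = - d x.
Proof. by apply/eqP; rewrite -addr_eq0 -ddD addNr dd0. Qed.
Lemma dd_sgn n x : d (sgn n * x) = sgn n * d x.
Proof. by rewrite !sgnE; case: odd; rewrite ?mulN1r ?mul1r ?ddN. Qed.

Lemma br0l y : br 0 y = 0.
Proof. have h := brDl hG 0 0 y; rewrite addr0 in h; apply: (addrI (br 0 y)); by rewrite addr0 -h. Qed.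
Lemma br0r y : br y 0 = 0.
Proof. have h := brDr hG y 0 0; rewrite addr0 in h; apply: (addrI (br y 0)); by rewrite addr0 -h. Qed.
Lemma brNl x y : br (-x) y = - br x y.
Proof. by apply/eqP; rewrite -addr_eq0 -(brDl hG) addNr br0l. Qed.

Section IP.
Variables (q : bool) (D : A -> A) (hD : superder (parA S) q D).
Lemma ip0 : ip D 0 = 0.
Proof. have h := ipD 0 0 hD; rewrite addr0 in h; apply: (addrI (ip D 0)); by rewrite addr0 -h. Qed.
Lemma ipN x : ip D (-x) = - ip D x.
Proof. by apply/eqP; rewrite -addr_eq0 -(ipD _ _ hD) addNr ip0. Qed.
Lemma ip_sgn n x : ip D (sgn n * x) = sgn n * ip D x.
Proof. by rewrite !sgnE; case: odd; rewrite ?mulN1r ?mul1r ?ipN. Qed.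
End IP.

Lemma parN p x : par S p x -> par S p (-x).
Proof. by move=> h; rewrite -scaleN1r; apply: parZ. Qed.

Lemma par_of0 r x : fdeg S 0 x -> par S r x -> parA S r (of0 S x).
Proof.
move=> h0 hp; have [a0 [a1 [h0' h1' E]]] := parA_decomp S (of0 S x).
have ex : x = e a0 + e a1 by rewrite -embD -E of0K.
case: r hp => hp.
- rewrite E; suff -> : a0 = 0 by rewrite add0r.
  apply: emb_inj; rewrite emb0; apply: par_indep.
    exact: emb_par.
  have -> : e a0 = x - e a1 by rewrite ex addrK.
  by apply: parD => //; apply: parN; apply: emb_par.
- rewrite E; suff -> : a1 = 0 by rewrite addr0.
  apply: emb_inj; rewrite emb0; apply: par_indep; last exact: emb_par.
  have -> : e a1 = x - e a0 by rewrite ex (addrC (e a0)) addrK.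
  by apply: parD => //; apply: parN; apply: emb_par.
Qed.


Lemma emb_bihom p f : parA S p f -> bihom S 0 p (e f).
Proof. by move=> h; split; [apply: emb_fdeg | apply: emb_par]. Qed.
Lemma demb_bihom p f : parA S p f -> bihom S 1 p (d (e f)).
Proof. by move=> h; split; [apply: dd_fdeg; apply: emb_fdeg | apply: dd_par; apply: emb_par]. Qed.
Lemma gen_bihom pf pg f g : parA S pf f -> parA S pg g ->
  bihom S 1 (pf (+) pg) (e f * d (e g)).
Proof.
move=> hf hg; have [h1 h2] := emb_bihom hf; have [h3 h4] := demb_bihom hg.
by split; [apply: (fdegM h1 h3) | apply: parM].
Qed.

Lemma bihomD k p x y : bihom S k p x -> bihom S k p y -> bihom S k p (x + y).
Proof. by move=> [? ?] [? ?]; split; [apply: fdegD | apply: parD]. Qed.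
Lemma bihom0 k p : bihom S k p 0.
Proof. by split; [apply: fdeg0 | apply: par0]. Qed.

Lemma gen1_ind p (P : Om -> Prop) : P 0 ->
  (forall x y, bihom S 1 p x -> bihom S 1 p y -> P x -> P y -> P (x + y)) ->
  (forall pf pg f g, parA S pf f -> parA S pg g -> pf (+) pg = p -> P (e f * d (e g))) ->
  forall x, bihom S 1 p x -> P x.
Proof.
move=> P0 PD Pg x [hx1 hx2]; have [s [hs ->]] := omega1_gen hx1 hx2.
suff : bihom S 1 p (\sum_(t <- s) e t.1 * d (e t.2)) /\ P (\sum_(t <- s) e t.1 * d (e t.2)) by case.
elim: s hs => [|t s IH] hs; first by rewrite big_nil; split => //; apply: bihom0.
rewrite big_cons.
have [pf [pg [hf hg hp]]] := hs t (mem_head _ _).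
have [IH1 IH2] := IH (fun u hu => hs u (mem_behead (s:=t :: s) hu)).
have ht : bihom S 1 p (e t.1 * d (e t.2)) by rewrite -hp; apply: gen_bihom.
split; first exact: bihomD.
by apply: PD => //; apply: Pg hp.
Qed.

Lemma rhoE b g : fdeg S 1 b -> e (rho b g) = br b (e g).
Proof. by move=> hb; rewrite /anchor of0K //; apply: (br_fdeg hG hb (emb_fdeg S g)). Qed.

Lemma rho_der q b : bihom S 1 q b -> superder (parA S) q (rho b).
Proof.
move=> [hb1 hb2]; split.
- by move=> a c; apply: emb_inj; rewrite embD !rhoE // embD (brDr hG).
- by move=> c a; apply: emb_inj; rewrite embZ !rhoE // embZ (brZr hG).
- move=> p a ha; rewrite addbC; apply: par_of0.
    exact: (br_fdeg hG hb1 (emb_fdeg S a)).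
  by apply: (br_par hG hb2); apply: emb_par.
- move=> p a c ha; apply: emb_inj.
  rewrite embD !embM !rhoE // embM emb_sgn.
  rewrite (br_leibniz hG (k:=1) (l:=0) (p:=q) (q:=p)) ?muln0 //.
  exact: emb_bihom.
Qed.


Lemma ip_gen q D (hD : superder (parA S) q D) pf f g : parA S pf f ->
  ip D (e f * d (e g)) = sgn (q && pf) * (e f * e (D g)).
Proof.
move=> hf; rewrite (ipM _ hD (emb_fdeg S f) (emb_par hf)) (ip_emb _ hD) (ip_d _ hD).
by rewrite mul0r add0r add0n.
Qed.

Lemma ip_dgen q D (hD : superder (parA S) q D) pf f g : parA S pf f ->
  ip D (d (e f) * d (e g)) = e (D f) * d (e g) + sgn (1 + (q && pf)) * (d (e f) * e (D g)).
Proof.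
move=> hf; have [h1 h2] := demb_bihom hf.
by rewrite (ipM _ hD h1 h2) !(ip_d _ hD).
Qed.

Lemma d_gen f g : d (e f * d (e g)) = d (e f) * d (e g).
Proof. by rewrite (ddM _ (emb_fdeg S f)) ddK !mulr0 addr0. Qed.

Lemma ipDD q D1 D2 D3 (hD1 : superder (parA S) q D1) (hD2 : superder (parA S) q D2)
  (hD3 : superder (parA S) q D3) (H : forall g, D3 g = D1 g + D2 g) p x :
  bihom S 1 p x -> ip D3 x = ip D1 x + ip D2 x.
Proof.
apply: (@gen1_ind p (fun x => ip D3 x = ip D1 x + ip D2 x)).
- by rewrite (ip0 hD1) (ip0 hD2) (ip0 hD3) addr0.
- move=> x1 y1 _ _ Hx Hy; rewrite (ipD _ _ hD1) (ipD _ _ hD2) (ipD _ _ hD3) Hx Hy.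
  by rewrite addrACA.
- move=> pf pg f g hf hg _; rewrite (ip_gen hD1 _ hf) (ip_gen hD2 _ hf) (ip_gen hD3 _ hf).
  by rewrite H embD !mulrDr.
Qed.

Lemma ipDD_d q D1 D2 D3 (hD1 : superder (parA S) q D1) (hD2 : superder (parA S) q D2)
  (hD3 : superder (parA S) q D3) (H : forall g, D3 g = D1 g + D2 g) p x :
  bihom S 1 p x -> ip D3 (d x) = ip D1 (d x) + ip D2 (d x).
Proof.
apply: (@gen1_ind p (fun x => ip D3 (d x) = ip D1 (d x) + ip D2 (d x))).
- by rewrite dd0 (ip0 hD1) (ip0 hD2) (ip0 hD3) addr0.
- move=> x1 y1 _ _ Hx Hy; rewrite ddD (ipD _ _ hD1) (ipD _ _ hD2) (ipD _ _ hD3) Hx Hy.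
  by rewrite addrACA.
- move=> pf pg f g hf hg _; rewrite d_gen (ip_dgen hD1 _ hf) (ip_dgen hD2 _ hf) (ip_dgen hD3 _ hf).
  by rewrite !H !embD mulrDl !mulrDr addrACA.
Qed.

Lemma rhoD x y g : fdeg S 1 x -> fdeg S 1 y -> rho (x + y) g = rho x g + rho y g.
Proof. by move=> hx hy; apply: emb_inj; rewrite embD !rhoE ?(brDl hG) //; apply: fdegD. Qed.
Lemma rho0 g : rho 0 g = 0.
Proof. by apply: emb_inj; rewrite rhoE ?br0l ?emb0 //; apply: fdeg0. Qed.

Lemma self_add0 (x : Om) : x = x + x -> x = 0.
Proof. by move=> h; apply: (addrI x); rewrite addr0 -h. Qed.

Lemma ip_rho0 p x : bihom S 1 p x -> ip (rho 0) x = 0.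
Proof.
move=> hx; have hD := rho_der (bihom0 1 p); apply: self_add0.
by apply: (ipDD hD hD hD _ hx) => g; rewrite rho0 addr0.
Qed.
Lemma ip_rho0_d p x : bihom S 1 p x -> ip (rho 0) (d x) = 0.
Proof.
move=> hx; have hD := rho_der (bihom0 1 p); apply: self_add0.
by apply: (ipDD_d hD hD hD _ hx) => g; rewrite rho0 addr0.
Qed.

Lemma LL ph pg' pg h g' g : parA S ph h -> parA S pg' g' -> parA S pg g ->
  br (e h * d (e g')) (e g) = e h * br (d (e g')) (e g).
Proof.
move=> hh hg' hg.
rewrite (br_skew hG (gen_bihom hh hg') (emb_bihom hg)).
rewrite (br_leibniz hG _ (emb_bihom hg) (emb_bihom hh)).
rewrite (br_fdeg0 hG) ?emb_fdeg // mul0r add0r.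
rewrite (br_skew hG (emb_bihom hg) (demb_bihom hg')).
by clear hh hg' hg; sgnsimp; case: ph; case: pg'; case: pg; rewrite /=; nrm.
Qed.

Lemma sw f g : br (d (e g)) (e f) = br (e g) (d (e f)).
Proof.
have := br_diff hG (e f) (emb_fdeg S g).
rewrite (br_fdeg0 hG) ?emb_fdeg // dd0 sgnE /= mulN1r => h.
by apply/eqP; rewrite -subr_eq0 -h.
Qed.

Lemma skew0 q1 q2 g1 g2 : parA S q1 g1 -> parA S q2 g2 ->
  br (d (e g2)) (e g1) = -(sgn (q2 && q1) * br (d (e g1)) (e g2)).
Proof.
move=> h1 h2; rewrite sw (br_skew hG (emb_bihom h2) (demb_bihom h1)).
by rewrite !sgnE !oddD !oddM !oddb.
Qed.

Lemma brdd f g : br (d (e f)) (d (e g)) = d (br (d (e f)) (e g)).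
Proof.
have h1 : fdeg S 1 (d (e f)) by apply: dd_fdeg; apply: emb_fdeg.
by rewrite (br_diff hG _ h1) ddK br0l add0r sgnE /= mul1r.
Qed.

Lemma emb_comm p1 p2 f1 f2 : parA S p1 f1 -> parA S p2 f2 ->
  e f2 * e f1 = sgn (p2 && p1) * (e f1 * e f2).
Proof. by move=> h1 h2; rewrite -embM (parA_comm h2 h1) embM emb_sgn embM. Qed.


Lemma skew_all pa pb a b : bihom S 1 pa a -> bihom S 1 pb b ->
  ip (rho b) a = -(sgn (pa && pb) * ip (rho a) b).
Proof.
move=> ha hb.
apply: (@gen1_ind pa (fun a => ip (rho b) a = -(sgn (pa && pb) * ip (rho a) b)) _ _ _ a ha).
- by rewrite (ip0 (rho_der hb)) (ip_rho0 hb) mulr0 oppr0.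
- move=> x y hx hy Hx Hy.
  rewrite (ipD _ _ (rho_der hb)) Hx Hy.
  rewrite (ipDD (rho_der hx) (rho_der hy) (rho_der (bihomD hx hy)) _ hb).
    by rewrite mulrDr opprD.
  by move=> g; apply: rhoD; [apply: (proj1 hx) | apply: (proj1 hy)].
move=> p1 q1 f1 g1 hf1 hg1 hpa.
have hA := gen_bihom hf1 hg1; rewrite hpa in hA.
apply: (@gen1_ind pb (fun b => ip (rho b) (e f1 * d (e g1)) =
   -(sgn (pa && pb) * ip (rho (e f1 * d (e g1))) b)) _ _ _ b hb).
- by rewrite (ip_rho0 hA) (ip0 (rho_der hA)) mulr0 oppr0.
- move=> x y hx hy Hx Hy.
  rewrite (ipD _ _ (rho_der hA)) mulrDr opprD -Hx -Hy.
  apply: (ipDD (rho_der hx) (rho_der hy) (rho_der (bihomD hx hy)) _ hA).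
  by move=> g; apply: rhoD; [apply: (proj1 hx) | apply: (proj1 hy)].
move=> p2 q2 f2 g2 hf2 hg2 hpb.
have hB := gen_bihom hf2 hg2; rewrite hpb in hB.
rewrite (ip_gen (rho_der hB) _ hf1) (ip_gen (rho_der hA) _ hf2).
rewrite !rhoE ?(proj1 hA) ?(proj1 hB) //.
rewrite (LL hf2 hg2 hg1) (LL hf1 hg1 hg2) (skew0 hg1 hg2).
rewrite (mulrA (e f2) (e f1)) (emb_comm hf1 hf2).
rewrite -hpa -hpb; clear.
by sgnsimp; case: p1; case: q1; case: p2; case: q2; rewrite /=; nrm.
Qed.


Lemma rearr (A1 A2 u1 u2 c1 c2 : Om) :
  (A1 - u1 + c1) + (A2 - u2 + c2) = (A1 + A2) - (u1 + u2) + (c1 + c2).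
Proof. by rewrite opprD addrACA (addrACA A1). Qed.

Lemma formula_gen p1 q1 p2 q2 f1 g1 f2 g2 :
  parA S p1 f1 -> parA S q1 g1 -> parA S p2 f2 -> parA S q2 g2 ->
  let a := e f1 * d (e g1) in let b := e f2 * d (e g2) in
  br a b = ip (rho a) (d b) - sgn ((p1 (+) q1) && (p2 (+) q2)) * ip (rho b) (d a)
     + d (ip (rho a) b).
Proof.
move=> hf1 hg1 hf2 hg2 a b.
have hA : bihom S 1 (p1 (+) q1) a := gen_bihom hf1 hg1.
have hB : bihom S 1 (p2 (+) q2) b := gen_bihom hf2 hg2.
rewrite {1}/b (br_leibniz hG _ hA (emb_bihom hf2)).
rewrite (br_skew hG hA (demb_bihom hg2)) {2}/a (br_leibniz hG _ (demb_bihom hg2) (emb_bihom hf1)).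
rewrite brdd (skew0 hg1 hg2).
rewrite /b d_gen (ip_dgen (rho_der hA) _ hf2).
rewrite /a d_gen (ip_dgen (rho_der hB) _ hf1).
rewrite (ip_gen (rho_der hA) _ hf2) dd_sgn.
rewrite !rhoE ?(proj1 hA) ?(proj1 hB) //.
rewrite (LL hf2 hg2 hf1) (LL hf2 hg2 hg1) (LL hf1 hg1 hg2) (skew0 hg1 hg2).
rewrite (ddM _ (emb_fdeg S f2)) (ddM _ (emb_fdeg S f1)) ddN dd_sgn.
rewrite !(sgnE _ 0) /= !mul1r.
rewrite ?(mulrDr, opprD, mulrN).
have hw : e f2 * d (e f1) = sgn (0 * 1 + (p2 && p1)) * (d (e f1) * e f2).
  apply: wedge_comm; [exact: emb_fdeg | exact: emb_par | | ].
    by apply: dd_fdeg; apply: emb_fdeg.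
  by apply: dd_par; apply: emb_par.
apply: fin_rearr.
- by clear hA hB hw hf1 hg1 hf2 hg2; sgnsimp; case: p1; case: q1; case: p2; case: q2; rewrite /=; nrm.
- by clear hA hB hw hf1 hg1 hf2 hg2; sgnsimp; case: p1; case: q1; case: p2; case: q2; rewrite /=; nrm.
- by clear hA hB hw hf1 hg1 hf2 hg2; sgnsimp; case: p1; case: q1; case: p2; case: q2; rewrite /=; nrm; rewrite ?addNr ?subrr.
- rewrite (mulrA (e f2) (d (e f1))) hw.
  by clear hA hB hw hf1 hg1 hf2 hg2; sgnsimp; case: p1; case: q1; case: p2; case: q2; rewrite /=; nrm.
Qed.


Lemma formula_all pa pb a b : bihom S 1 pa a -> bihom S 1 pb b ->
  br a b = ip (rho a) (d b) - sgn (pa && pb) * ip (rho b) (d a) + d (ip (rho a) b).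
Proof.
move=> ha hb.
apply: (@gen1_ind pa (fun a => br a b = ip (rho a) (d b) - sgn (pa && pb) * ip (rho b) (d a)
   + d (ip (rho a) b)) _ _ _ a ha).
- by rewrite br0l (ip_rho0_d hb) dd0 (ip0 (rho_der hb)) (ip_rho0 hb) dd0 mulr0 subr0 addr0.
- move=> x y hx hy Hx Hy.
  have H g : rho (x + y) g = rho x g + rho y g.
    by apply: rhoD; [apply: (proj1 hx) | apply: (proj1 hy)].
  have hxy := bihomD hx hy.
  rewrite (brDl hG) Hx Hy (ipDD_d (rho_der hx) (rho_der hy) (rho_der hxy) H hb).
  rewrite ddD (ipD _ _ (rho_der hb)) mulrDr.
  rewrite (ipDD (rho_der hx) (rho_der hy) (rho_der hxy) H hb) ddD.
  by rewrite rearr.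
move=> p1 q1 f1 g1 hf1 hg1 hpa.
have hA := gen_bihom hf1 hg1; rewrite hpa in hA.
apply: (@gen1_ind pb (fun b => br (e f1 * d (e g1)) b =
   ip (rho (e f1 * d (e g1))) (d b) - sgn (pa && pb) * ip (rho b) (d (e f1 * d (e g1)))
   + d (ip (rho (e f1 * d (e g1))) b)) _ _ _ b hb).
- by rewrite br0r dd0 (ip0 (rho_der hA)) (ip_rho0_d hA) dd0 mulr0 subr0 addr0.
- move=> x y hx hy Hx Hy.
  have H g : rho (x + y) g = rho x g + rho y g.
    by apply: rhoD; [apply: (proj1 hx) | apply: (proj1 hy)].
  have hxy := bihomD hx hy.
  rewrite (brDr hG) Hx Hy ddD (ipD _ _ (rho_der hA)).
  rewrite (ipDD_d (rho_der hx) (rho_der hy) (rho_der hxy) H hA) mulrDr.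
  rewrite (ipD _ _ (rho_der hA)) ddD.
  by rewrite rearr.
move=> p2 q2 f2 g2 hf2 hg2 hpb; rewrite -hpa -hpb.
exact: formula_gen.
Qed.

End Main.

Theorem mainTheorem7 (K : realFieldType) (A Om : lalgType K)
    (S : superforms A Om) (br : Om -> Om -> Om)
    (hG : diff_gerstenhaber S br) :
  let rho := anchor S br in
  [/\ skew_anchor S rho,
      (forall f g : A, br (dd S (emb S f)) (dd S (emb S g))
                       = dd S (emb S (rho (dd S (emb S f)) g))),
      (forall pa pb a b, bihom S 1 pa a -> bihom S 1 pb b ->
         br a b = ip S (rho a) (dd S b)
                  - sgn (pa && pb) * ip S (rho b) (dd S a)
                  + dd S (emb S (pairing S b (rho a))))
    & poisson_type S rho].
Proof.
move=> rho.
have hsk : skew_anchor S rho.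
  move=> pa pb a b ha hb; rewrite /pairing; apply: (emb_inj (S:=S)).
  rewrite embN embM emb_sgn !of0K.
  - exact: (skew_all hG ha hb).
  - exact: (ip_fdeg (rho_der hG ha) (proj1 hb)).
  - exact: (ip_fdeg (rho_der hG hb) (proj1 ha)).
have h2 : forall f g : A, br (dd S (emb S f)) (dd S (emb S g))
                       = dd S (emb S (rho (dd S (emb S f)) g)).
  move=> f g; rewrite /rho (rhoE hG) ?(brdd hG) //.
  by apply: dd_fdeg; apply: emb_fdeg.
split => //.
- move=> pa pb a b ha hb; rewrite /pairing of0K.
    exact: (formula_all hG ha hb).
  exact: (ip_fdeg (rho_der hG ha) (proj1 hb)).
- split => //; cbv zeta; move=> pf pg ph f g h hf hg hh.
  have d1 : forall u, fdeg S 1 (dd S (emb S u)) by move=> u; apply: dd_fdeg; apply: emb_fdeg.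
  apply: (emb_inj (S:=S)).
  rewrite embD embM emb_sgn !(rhoE hG) ?d1 //.
  rewrite -(brdd hG).
  rewrite (br_jacobi hG _ (demb_bihom hf) (demb_bihom hg)).
  by rewrite !sgnE oddD oddM.
rewrite -(brdd hG); exact: (br_fdeg hG (d1 f) (d1 g)).
Qed.
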